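(* In the stalactic monoid ${\mathsf{stal}}$, the relation $\sim_o$ coincides with $\equiv_{\mathrm{ev}}$: for $s,t\in{\mathsf{stal}}$, there exist $g,h\in{\mathsf{stal}}$ with $sg=gt$ and $hs=th$ if and only if $s$ and $t$ have the same evaluation.
   Context: Let $\mathcal{A}=\{1<2<3<\cdots\}$ be the ordered alphabet of positive integers. For a monoid $M$ and $x,y\in M$, write $x\sim_o y$ iff there exist $g,h\in M$ with $xg=gy$ and $hx=yh$. The evaluation of a word $w$ is the tuple $(|w|_a)_{a}$ giving the number of occurrences of each letter $a$; the monoid below is defined by evaluation-preserving relations, so the evaluation of an element is well defined, and $s\equiv_{\mathrm{ev}} t$ means $s$ and $t$ have the same evaluation. The stalactic monoid ${\mathsf{stal}}$ is $\mathcal{A}^*$ modulo the congruence generated by the relations $bavb=abvb$ for all letters $a,b$ and words $v\in\mathcal{A}^*$. Equivalently, two words are equal in ${\mathsf{stal}}$ iff they have the same evaluation and the same order of rightmost occurrences of their letters. *)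

(* Defs.v *)
From mathcomp Require Import all_boot.
Set Implicit Arguments. Unset Strict Implicit. Unset Printing Implicit Defensive.

Definition word := seq nat.
Definition is_word (w : word) : bool := all (fun a => 0 < a) w.

Definition stal_rel (l r : word) : Prop :=
  exists a b (v : word), 0 < a /\ 0 < b /\ is_word v /\
    l = [:: b, a & v ++ [:: b]] /\ r = [:: a, b & v ++ [:: b]].

Inductive stal_eq : word -> word -> Prop :=
| stal_step : forall u w l r, stal_rel l r -> stal_eq (u ++ l ++ w) (u ++ r ++ w)
| stal_refl : forall w, stal_eq w w
| stal_sym : forall w1 w2, stal_eq w1 w2 -> stal_eq w2 w1
| stal_trans : forall w1 w2 w3, stal_eq w1 w2 -> stal_eq w2 w3 -> stal_eq w1 w3.

(* x ~_o y in stal (elements represented by words; product = concatenation). *)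
Definition stal_conj_o (x y : word) : Prop :=
  exists g h : word, is_word g /\ is_word h /\
    stal_eq (x ++ g) (g ++ y) /\ stal_eq (h ++ x) (y ++ h).

Definition evaluation (w : word) : nat -> nat := fun a => count_mem a w.
Definition ev_equiv (s t : word) : Prop := forall a, 0 < a -> evaluation s a = evaluation t a.

(* Main.v *)
Require Import Defs.
From mathcomp Require Import all_boot zify.

Lemma stal_cong_l c a b : stal_eq a b -> stal_eq (c ++ a) (c ++ b).
Proof.
elim=> [u w l r H|w|w1 w2 _ IH|w1 w2 w3 _ IH1 _ IH2].
- by have := stal_step (c ++ u) w H; rewrite -!catA.
- exact: stal_refl.
- exact: stal_sym.
- exact: stal_trans IH1 IH2.
Qed.

Lemma swap_lem u x y w : 0 < x -> 0 < y -> is_word w -> x \in w ->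
  stal_eq (u ++ [:: y; x] ++ w) (u ++ [:: x; y] ++ w).
Proof.
move=> hx hy hw xw; move: hw; case/splitPr: xw => w1 w2 hw.
have hw1 : is_word w1 by move: hw; rewrite /is_word all_cat => /andP[].
apply: stal_sym.
have -> : [:: x; y] ++ w1 ++ x :: w2 = [:: x, y & w1 ++ [:: x]] ++ w2
  by rewrite /= -catA.
have -> : [:: y; x] ++ w1 ++ x :: w2 = [:: y, x & w1 ++ [:: x]] ++ w2
  by rewrite /= -catA.
apply: stal_step; exists y, x, w1; split=> //.
Qed.

Lemma move_lem p w x : 0 < x -> is_word p -> is_word w -> x \in w ->
  stal_eq (p ++ x :: w) (x :: p ++ w).
Proof.
move=> hx; elim: p => [|c p IH] /=; first by move=> *; exact: stal_refl.
move=> /andP[hc hp] hw xw.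
eapply stal_trans; first exact: (stal_cong_l [:: c] _ _ (IH hp hw xw)).
have := @swap_lem [::] x c (p ++ w) hx hc.
rewrite /=; apply.
  by rewrite /is_word all_cat; apply/andP.
by rewrite mem_cat xw orbT.
Qed.

Lemma perm_lem u1 u2 v : perm_eq u1 u2 -> {subset u1 <= v} -> is_word u1 ->
  is_word v -> stal_eq (u1 ++ v) (u2 ++ v).
Proof.
elim: u1 u2 => [|x u1 IH] u2.
  by rewrite perm_sym => /perm_nilP -> *; exact: stal_refl.
move=> hp hsub /= /andP[hx hu1] hv.
have xu2 : x \in u2 by rewrite -(perm_mem hp) mem_head.
move: hp; case/splitPr: xu2 => p q hp.
have hw2 : is_word (p ++ x :: q) by rewrite /is_word -(perm_all _ hp) /= hx.
have hpq : is_word (p ++ q).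
  by move: hw2; rewrite /is_word !all_cat /= => /and3P[-> _ ->].
have hp' : perm_eq u1 (p ++ q).
  by rewrite -(perm_cons x); rewrite (perm_trans hp) // -cat1s perm_catCA.
eapply stal_trans; first apply: (stal_cong_l [:: x] _ _ (IH _ hp' _ hu1 hv)).
  by move=> y hy; apply: hsub; rewrite in_cons hy orbT.
rewrite /= -catA -!cat_cons -catA /=; apply: stal_sym; apply: move_lem => //.
- by move: hpq; rewrite /is_word all_cat => /andP[].
- by move: hpq hv; rewrite /is_word !all_cat => /andP[_ ->].
- by rewrite mem_cat (hsub x (mem_head _ _)) orbT.
Qed.

Lemma stal_count a w1 w2 : stal_eq w1 w2 -> count_mem a w1 = count_mem a w2.
Proof.
elim=> [u w l r [x [y [v [_ [_ [_ [-> ->]]]]]]]|w|w1' w2' _ IH|w1' w2' w3 _ IH1 _ IH2] //.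
- by rewrite !count_cat /=; lia.
- by rewrite IH1.
Qed.

Theorem mainTheorem9 (s t : word) :
  is_word s -> is_word t -> (stal_conj_o s t <-> ev_equiv s t).
Proof.
move=> hs ht; split.
  move=> [g [h [_ [_ [H _]]]]] a _; have := stal_count a _ _ H.
  by rewrite !count_cat addnC => /addnI.
move=> hev.
have hperm : perm_eq s t.
  apply/allP => x; rewrite mem_cat => hx /=; apply/eqP; apply: hev.
  by case/orP: hx => hx; [move/allP: hs|move/allP: ht]; apply.
exists t, s; split=> //; split=> //; split.
  apply: perm_lem => // x hx; by rewrite -(perm_mem hperm).
apply: perm_lem => // x hx.
Qed.
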